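(* Let $a,b,c$ be positive integers and $r=[2a,-2,-2b,2c]$. If $bc\ge 2a(c+1)$, then all zeros of $\Delta_{K(r)}(t)$ are real (i.e. $K(r)$ is stable).
   Context: For a finite sequence $r=[2a_1,2a_2,\dots,2a_n]$ of nonzero even integers, $K(r)$ denotes the 2-bridge knot or link whose associated rational number has the even continued fraction expansion $1/(2a_1-1/(2a_2-\cdots-1/(2a_n)))$ ($K(r)$ is a knot if $n$ is even and a 2-component link if $n$ is odd). Let $M(r)$ be the $n\times n$ integer matrix whose $(k,k)$-entry is $a_k$ ($1\le k\le n$), whose $(k,k+1)$-entry is $1$ ($1\le k\le n-1$), and whose other entries are $0$; it is a Seifert matrix of $K(r)$, and $\Delta_{K(r)}(t)=\det(tM(r)-M(r)^T)$ is the (reduced) Alexander polynomial of $K(r)$ (well defined up to sign). A knot or link is called stable if all zeros of its Alexander polynomial are real. *)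

(* Defs.v *)
From HB Require Import structures.
From mathcomp Require Import all_boot all_order all_algebra all_field.
Set Implicit Arguments. Unset Strict Implicit. Unset Printing Implicit Defensive.
Import Order.TTheory GRing.Theory Num.Theory.
Local Open Scope ring_scope.

(* For r = [2a_1; ...; 2a_n] (a list of nonzero even integers), the halved
   entries a_k = r_k / 2. *)
Definition halves (r : seq int) : seq int := [seq (x %/ 2)%Z | x <- r].

Definition seifert_mx (r : seq int) : 'M[int]_(size r) :=
  \matrix_(i < size r, j < size r)
     (if i == j then (halves r)`_i
      else if (j : nat) == i.+1 then 1 else 0).

Definition alexander_poly (r : seq int) : {poly int} :=
  \det ('X *: map_mx polyC (seifert_mx r) - map_mx polyC (seifert_mx r)^T).

Definition all_zeros_real (p : {poly int}) : Prop :=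
  forall z : algC, root (map_poly intr p) z -> z \is Num.real.

Definition stable_K (r : seq int) : Prop := all_zeros_real (alexander_poly r).

(* Main.v *)
Require Import Defs.
From HB Require Import structures.
From mathcomp Require Import all_boot all_order all_algebra all_field.
From mathcomp Require Import ring zify.
Import Order.TTheory GRing.Theory Num.Theory.
Local Open Scope ring_scope.
Lemma minor_mx (R : comNzRingType) n (f : nat -> nat -> R) (i j : 'I_n.+1) :
  row' i (col' j (\matrix_(k < n.+1, l < n.+1) f k l)) =
  \matrix_(k < n, l < n) (fun k' l' : nat => f (bump i k') (bump j l')) k l.
Proof. by apply/matrixP => k l; rewrite !mxE. Qed.

Definition d2 {R : comNzRingType} (f : nat -> nat -> R) := f 0 0 * f 1 1 - f 0 1 * f 1 0.

Lemma det2 (R : comNzRingType) (f : nat -> nat -> R) :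
  \det (\matrix_(i < 2, j < 2) f i j) = d2 f.
Proof.
rewrite (expand_det_row _ 0) !big_ord_recl big_ord0 /cofactor !det_mx11 /=.
rewrite !mxE /= /bump /= /d2. ring.
Qed.

Definition d3 {R : comNzRingType} (f : nat -> nat -> R) :=
  f 0 0 * d2 (fun k l => f k.+1 (bump 0 l)) - f 0 1 * d2 (fun k l => f k.+1 (bump 1 l))
  + f 0 2 * d2 (fun k l => f k.+1 (bump 2 l)).

Lemma det3 (R : comNzRingType) (f : nat -> nat -> R) :
  \det (\matrix_(i < 3, j < 3) f i j) = d3 f.
Proof.
rewrite (expand_det_row _ 0) !big_ord_recl big_ord0 /cofactor !minor_mx !(det2 _ (fun k l => f (bump _ k) (bump _ l))) /=.
rewrite !mxE /= /d3. rewrite /bump /=. ring.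
Qed.

Definition d4 {R : comNzRingType} (f : nat -> nat -> R) :=
  f 0 0 * d3 (fun k l => f k.+1 (bump 0 l)) - f 0 1 * d3 (fun k l => f k.+1 (bump 1 l))
  + f 0 2 * d3 (fun k l => f k.+1 (bump 2 l)) - f 0 3 * d3 (fun k l => f k.+1 (bump 3 l)).

Lemma det4 (R : comNzRingType) (f : nat -> nat -> R) :
  \det (\matrix_(i < 4, j < 4) f i j) = d4 f.
Proof.
rewrite (expand_det_row _ 0) !big_ord_recl big_ord0 /cofactor !minor_mx !(det3 _ (fun k l => f (bump _ k) (bump _ l))) /=.
rewrite !mxE /= /d4. rewrite /bump /=. ring.
Qed.
Lemma halvesE (a b c : int) : halves [:: 2 * a; -2; -2 * b; 2 * c] = [:: a; -1; -b; c].
Proof.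
rewrite /halves /=.
have h2 : (2 : int) != 0 by [].
rewrite mulKz // (mulKz _ h2) (_ : -2 * b = 2 * (- b)) ?mulKz //; last by rewrite mulrN mulNr.
Qed.

Definition gm (h : seq int) (i j : nat) : int :=
  if i == j then h`_i else if j == i.+1 then 1 else 0.

Lemma alexE (a b c : int) :
  alexander_poly [:: 2 * a; -2; -2 * b; 2 * c] =
  a%:P * b%:P * c%:P * ('X - 1) ^+ 4
  + (a%:P * c%:P - b%:P * c%:P - a%:P) * ('X - 1) ^+ 2 * 'X + 'X ^+ 2.
Proof.
pose h := [:: a; -1; -b; c].
pose g := fun i j : nat => 'X * (gm h i j)%:P - (gm h j i)%:P.
have -> : alexander_poly [:: 2 * a; -2; -2 * b; 2 * c] =
   \det (\matrix_(i < 4, j < 4)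
     g i j).
  rewrite /alexander_poly /seifert_mx halvesE; congr (\det _).
  by apply/matrixP => i j; rewrite !mxE /g /gm mulrC.
rewrite det4 /d4 /d3 /d2 /g /= /bump /gm /=.
rewrite !polyCN !polyC1 !polyC0. ring.
Qed.
Lemma intD (a b c : int) : 0 < a -> 0 < b -> 0 < c -> 2 * a * (c + 1) <= b * c ->
  0 <= (a * c - b * c - a) ^+ 2 - 4 * (a * b * c) /\ a * c - b * c - a <= 0.
Proof.
move=> ha hb hc h; split; last by nia.
rewrite expr2.
have h1 : 0 <= (b*c - a*c + a - 2*a - a*(c+1)) * (b*c - a*c + a - 2*a + a*(c+1)) by apply: mulr_ge0; nia.
have h2 : 0 <= (a*(c-1)) * (a*(c-1)) by rewrite -expr2 sqr_ge0.
nia.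
Qed.

Lemma sq_real (x d : algC) : x ^+ 2 = d -> 0 <= d -> x \is Num.real.
Proof.
move=> hx hd.
have : (x - sqrtC d) * (x + sqrtC d) = 0.
  by rewrite -subr_sqr sqrtCK hx subrr.
move/eqP; rewrite mulf_eq0 => /orP[]; [rewrite subr_eq0 | rewrite addr_eq0] => /eqP ->.
  exact: sqrtC_real.
by rewrite rpredN sqrtC_real.
Qed.

Theorem proposition8p1 (a b c : int) :
  0 < a -> 0 < b -> 0 < c -> 2 * a * (c + 1) <= b * c ->
  stable_K [:: 2 * a; -2; -2 * b; 2 * c].
Proof.
move=> ha hb hc h z.
have [hD hL] := intD _ _ _ ha hb hc h.
rewrite /stable_K alexE /root.
rewrite !(rmorphD, rmorphM, rmorphB, rmorphXn, map_polyC, map_polyX, rmorph1) /=.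
rewrite !hornerE /= !map_polyC !map_polyX !hornerC !hornerX /= rmorphN1.
rewrite !(rmorphN, rmorphM, map_polyC, hornerN, hornerM, hornerC, hornerE) /=.
rewrite !map_polyC !hornerC.
set A : algC := a%:~R; set B : algC := b%:~R; set C : algC := c%:~R.
move=> /eqP hz.
set K := A * B * C; set L := A * C - B * C - A.
have Kpos : 0 < K by rewrite /K -!rmorphM ltr0z !mulr_gt0.
have hz' : K * (z - 1) ^+ 4 + L * (z - 1) ^+ 2 * z + z ^+ 2 = 0.
  rewrite -hz /K /L /A /B /C. ring.
have LE : L = (a * c - b * c - a)%:~R by rewrite /L /A /B /C !rmorphB !rmorphM.
have Lle : L <= 0 by rewrite LE lerz0.
have Lr : L \is Num.real by rewrite LE realz.
have KE : K = (a * b * c)%:~R by rewrite /K /A /B /C !rmorphM.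
have Kr : K \is Num.real by rewrite KE realz.
have z0 : z != 0.
  apply/eqP => z0; have : K = 0 by rewrite -hz' z0; ring.
  by move/eqP; rewrite (gt_eqF Kpos).
have K0 : K != 0 by rewrite (gt_eqF Kpos).
set w := (z - 1) ^+ 2 / z.
have hw : K * w ^+ 2 + L * w + 1 = 0.
  have -> : K * w ^+ 2 + L * w + 1 = (K * (z - 1) ^+ 4 + L * (z - 1) ^+ 2 * z + z ^+ 2) / z ^+ 2.
    by rewrite /w; field.
  by rewrite hz' mul0r.
set Dc := L ^+ 2 - 4 * K.
have Dge : 0 <= Dc.
  have -> : Dc = ((a * c - b * c - a) ^+ 2 - 4 * (a * b * c))%:~R.
    rewrite /Dc LE KE (_ : (4 : algC) = (4 : int)%:~R) //.
    by rewrite -rmorphXn -rmorphM -rmorphB.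
  by rewrite ler0z.
have e : (2 * K * w + L) ^+ 2 = Dc + 4 * K * (K * w ^+ 2 + L * w + 1) by rewrite /Dc; ring.
rewrite hw mulr0 addr0 in e.
have wr : w \is Num.real.
  have -> : w = ((2 * K * w + L) - L) / (2 * K) by field.
  apply: rpredM; first by apply: rpredB => //; exact: sq_real _ _ e Dge.
  by rewrite rpredV; apply: rpredM => //; apply: realn.
have wge : 0 <= w.
  move: wr; rewrite realE => /orP[//|w0].
  have : 1 <= K * w ^+ 2 + L * w + 1.
    rewrite lerDr; apply: addr_ge0; last exact: mulr_le0.
    by apply: mulr_ge0; [exact: ltW Kpos | rewrite expr2; exact: mulr_le0].
  by rewrite hw ler10.
have e2 : (2 * z - (w + 2)) ^+ 2 = w * (w + 4) by rewrite /w; field.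
have r2 := sq_real _ _ e2 (mulr_ge0 wge (addr_ge0 wge (ler0n _ 4))).
have -> : z = ((2 * z - (w + 2)) + (w + 2)) / 2 by field.
apply: rpredM; last by rewrite rpredV realn.
by apply: rpredD => //; apply: rpredD => //; apply: realn.
Qed.
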